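(* Let $n\ge 2$ and let $g_1,g_2\in\hat S_n$ be glides with offsets $k_1$ and $k_2$ respectively. Then $$g_2g_1=\rho^{k_2}(g_1)\,\rho^{-k_1}(g_2).$$
   Context: The affine symmetric group $\hat S_n$ is generated by $s_0,s_1,\dots,s_{n-1}$ (indices taken modulo $n$) subject to $s_i^2=1$, $s_is_js_i=s_js_is_j$ if $i-j\equiv\pm1\pmod n$, and $s_is_j=s_js_i$ if $i-j\not\equiv 0,\pm1\pmod n$. Let $\rho:\hat S_n\to\hat S_n$ be the automorphism with $\rho(s_i)=s_{i+1}$ for all $i$. Let $\phi:\hat S_n\to S_n$ be the homomorphism with $\phi(s_i)=(i\ \ i+1)$ for $1\le i\le n-1$ and $\phi(s_0)=(1\ \ n)$. An element $g\in\hat S_n$ is a glide if for some $k\in\{0,1,\dots,n-1\}$ the permutation $\phi(g)$ sends $j\mapsto j+k$ for $1\le j\le n-k$ and $j\mapsto j+k-n$ for $n-k<j\le n$; this $k$ is the offset of $g$. *)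

(* Defs.v *)
From mathcomp Require Import all_boot.
Set Implicit Arguments. Unset Strict Implicit. Unset Printing Implicit Defensive.

(* Words over the generators s_i (i : nat, indices taken modulo n).
   The word [:: i1; ...; im] stands for the product s_{i1} s_{i2} ... s_{im}. *)
Definition word := seq nat.

Definition adj_mod (n i j : nat) : bool :=
  (i %% n == (j + 1) %% n) || (j %% n == (i + 1) %% n).

(* The congruence on words generated by the Coxeter presentation of \hat S_n:
   two words are related iff they represent the same element of \hat S_n. *)
Inductive aeq (n : nat) : word -> word -> Prop :=
| aeq_refl w : aeq n w w
| aeq_sym u v : aeq n u v -> aeq n v u
| aeq_trans u v w : aeq n u v -> aeq n v w -> aeq n u w
| aeq_ctx a b u v : aeq n u v -> aeq n (a ++ u ++ b) (a ++ v ++ b)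
| aeq_mod i : aeq n [:: i] [:: i %% n]
| aeq_sq i : aeq n [:: i; i] [::]
| aeq_braid i j : adj_mod n i j -> aeq n [:: i; j; i] [:: j; i; j]
| aeq_comm i j : i %% n != j %% n -> ~~ adj_mod n i j -> aeq n [:: i; j] [:: j; i].

Definition rho_pow (n k : nat) (w : word) : word := map (fun i => (i + k) %% n) w.
Definition rho_powN (n k : nat) (w : word) : word :=
  map (fun i => (i + (n - k %% n)) %% n) w.

Definition swap (a b x : nat) : nat := if x == a then b else if x == b then a else x.

(* phi(s_i) = (i i+1) for 1 <= i <= n-1, phi(s_0) = (1 n), points 1..n *)
Definition phi_gen (n i : nat) : nat -> nat :=
  if i %% n == 0 then swap 1 n else swap (i %% n) (i %% n).+1.

Definition phi (n : nat) (w : word) : nat -> nat :=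
  foldr (fun i f x => phi_gen n i (f x)) id w.

Definition glide_offset (n : nat) (w : word) (k : nat) : Prop :=
  k < n /\
  (forall j, 1 <= j <= n - k -> phi n w j = j + k) /\
  (forall j, n - k < j <= n -> phi n w j = j + k - n).

(* Main.v *)
Require Import Defs.
From mathcomp Require Import all_boot all_algebra zify.
From Stdlib Require Import FunctionalExtensionality.
Import GRing.Theory Num.Theory.
From mathcomp Require Import order.
Import Order.TTheory.
Set Implicit Arguments. Unset Strict Implicit. Unset Printing Implicit Defensive.

Section Aff.
Variable n : nat.
Hypothesis n2 : (2 <= n)%N.
Local Open Scope ring_scope.

Definition s0 (t : int) : int :=
  if (n%:Z %| t)%Z then t + 1 else if (n%:Z %| t - 1)%Z then t - 1 else t.

Lemma dvd_small (c : int) : (n%:Z %| c)%Z -> - (2 * n%:Z) < c < 2 * n%:Z ->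
  c = 0 \/ c = n%:Z \/ c = - n%:Z.
Proof.
move=> /dvdzP [q ->] hb.
have: q = 0 \/ q = 1 \/ q = -1 \/ q >= 2 \/ q <= -2 by lia.
case=> [->|[->|[->|[h|h]]]]; first by left; rewrite mul0r.
- by right; left; rewrite mul1r.
- by right; right; rewrite mulN1r.
- exfalso; nia.
- exfalso; nia.
Qed.

Lemma dvdD (a b : int) : (n%:Z %| a)%Z -> (n%:Z %| b)%Z -> (n%:Z %| a + b)%Z.
Proof. exact: rpredD. Qed.
Lemma dvdN (a : int) : (n%:Z %| - a)%Z = (n%:Z %| a)%Z.
Proof. exact: rpredN. Qed.
Lemma dvdB (a b : int) : (n%:Z %| a)%Z -> (n%:Z %| b)%Z -> (n%:Z %| a - b)%Z.
Proof. exact: rpredB. Qed.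

Lemma s0_up (M t : int) : (n%:Z %| M)%Z ->
  (t - M = 0 \/ t - M = n%:Z \/ t - M = - n%:Z) -> s0 t = t + 1.
Proof.
move=> hM h; rewrite /s0.
have -> : (n%:Z %| t)%Z; last by [].
have -> : t = (t - M) + M by rewrite subrK.
apply: dvdD => //.
by case: h => [->|[->|->]]; rewrite ?dvdN.
Qed.

Lemma s0_dn (M t : int) : (n%:Z %| M)%Z ->
  (t - M = 1 \/ t - M = n%:Z + 1 \/ t - M = 1 - n%:Z) -> s0 t = t - 1.
Proof.
move=> hM h; rewrite /s0.
have -> : (n%:Z %| t - 1)%Z.
  have -> : t - 1 = (t - M - 1) + M by lia.
  apply: dvdD => //.
  case: h => [->|[->|->]]; first by rewrite subrr.
  - by rewrite addrK.
  - by rewrite addrAC subrr add0r dvdN.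
case: ifP => // ht.
have : (n%:Z %| t - M)%Z by rewrite dvdB.
move=> /dvd_small; lia.
Qed.

Lemma s0_id (M t : int) : (n%:Z %| M)%Z ->
  1 - (2 * n%:Z) < t - M < 2 * n%:Z - 1 ->
  t - M != 0 -> t - M != n%:Z -> t - M != - n%:Z ->
  t - M != 1 -> t - M != n%:Z + 1 -> t - M != 1 - n%:Z -> s0 t = t.
Proof.
move=> hM hb h1 h2 h3 h4 h5 h6; rewrite /s0.
case: ifP => [ht|_].
  have : (n%:Z %| t - M)%Z by rewrite dvdB.
  move=> /dvd_small; lia.
case: ifP => [ht|_] //.
have : (n%:Z %| t - 1 - M)%Z by rewrite dvdB.
move=> /dvd_small; lia.
Qed.

Ltac s0ev M :=
  repeat (match goal with |- context [s0 ?t] =>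
    lazymatch t with context [s0 _] => fail | _ =>
      first [ rewrite (@s0_up M t); [|done|lia]
            | rewrite (@s0_dn M t); [|done|lia]
            | rewrite (@s0_id M t); [|done|lia ..] ] end end).


Lemma decomp (y : int) : exists M r, [/\ (n%:Z %| M)%Z, 0 <= r < n%:Z & y = r + M].
Proof.
exists (y - modz y n%:Z), (modz y n%:Z); split.
- apply/dvdzP; exists (divz y n%:Z). by rewrite {1}(divz_eq y n%:Z) addrK.
- rewrite modz_ge0 ?ltz_mod //=; lia.
- by rewrite addrC subrK.
Qed.

Lemma s0_comm (c u : int) : 2 <= c <= n%:Z - 2 ->
  c + s0 (s0 u - c) = s0 (c + s0 (u - c)).
Proof.
move=> hc; have [M [r [hM hr ->]]] := decomp u.
have : r = 0 \/ r = 1 \/ r = c \/ r = c + 1 \/ (r != 0 /\ r != 1 /\ r != c /\ r != c+1) by lia.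
case=> [->|[->|[->|[->|[?[?[??]]]]]]]; s0ev M; lia.
Qed.

Lemma s0_braid (u : int) : (3 <= n)%N ->
  s0 (1 + s0 (s0 u - 1)) = 1 + s0 (s0 (1 + s0 (u - 1)) - 1).
Proof.
move=> n3; have [M [r [hM hr ->]]] := decomp u.
have : r = 0 \/ r = 1 \/ r = 2 \/ (r != 0 /\ r != 1 /\ r != 2) by lia.
case=> [->|[->|[->|[?[??]]]]]; s0ev M; lia.
Qed.


Lemma dvd_addM (a M : int) : (n%:Z %| M)%Z -> (n%:Z %| a + M)%Z = (n%:Z %| a)%Z.
Proof.
move=> hM; apply/idP/idP => h; last exact: dvdD.
by have := dvdB h hM; rewrite addrK.
Qed.

Lemma s0_shift (M t : int) : (n%:Z %| M)%Z -> s0 (t + M) = s0 t + M.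
Proof.
move=> hM; rewrite /s0 (dvd_addM t hM).
have -> : t + M - 1 = (t - 1) + M by lia.
rewrite (dvd_addM (t - 1) hM).
by case: (n%:Z %| t)%Z; case: (n%:Z %| t - 1)%Z; lia.
Qed.

Lemma s0_inv (t : int) : s0 (s0 t) = t.
Proof. have [M [r [hM hr ->]]] := decomp t.
have : r = 0 \/ r = 1 \/ (r != 0 /\ r != 1) by lia.
case=> [->|[->|[??]]]; s0ev M; lia.
Qed.

Definition s (j x : int) : int := j + s0 (x - j).

Lemma s_shift (M j x : int) : (n%:Z %| M)%Z -> s j (x + M) = s j x + M.
Proof.
move=> hM; rewrite /s.
have -> : x + M - j = (x - j) + M by lia.
rewrite s0_shift //; lia.
Qed.

Lemma s_inv (j x : int) : s j (s j x) = x.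
Proof. rewrite /s. have -> : j + s0 (x - j) - j = s0 (x - j) by lia.
rewrite s0_inv; lia. Qed.

Lemma s_idx (j j' x : int) : (n%:Z %| j - j')%Z -> s j x = s j' x.
Proof.
move=> h; rewrite /s.
have -> : x - j = (x - j') + (- (j - j')) by lia.
rewrite s0_shift ?dvdN //; lia.
Qed.

Lemma s_comm (i d x : int) : 2 <= i - d <= n%:Z - 2 -> s i (s d x) = s d (s i x).
Proof.
move=> h; rewrite /s.
have := s0_comm (x - d) h.
have -> : d + s0 (x - d) - i = s0 (x - d) - (i - d) by lia.
have -> : x - d - (i - d) = x - i by lia.
have -> : i + s0 (x - i) - d = (i - d) + s0 (x - i) by lia.
lia.
Qed.

Lemma s_braid (p x : int) : (3 <= n)%N ->
  s p (s (p + 1) (s p x)) = s (p + 1) (s p (s (p + 1) x)).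
Proof.
move=> n3; rewrite /s.
have := s0_braid (x - p) n3.
have -> : x - (p + 1) = x - p - 1 by lia.
have -> : p + s0 (x - p) - (p + 1) = s0 (x - p) - 1 by lia.
have -> : p + 1 + s0 (s0 (x - p) - 1) - p = 1 + s0 (s0 (x - p) - 1) by lia.
have -> : p + 1 + s0 (x - p - 1) - p = 1 + s0 (x - p - 1) by lia.
have -> : p + s0 (1 + s0 (x - p - 1)) - (p + 1) = s0 (1 + s0 (x - p - 1)) - 1 by lia.
lia.
Qed.

Definition act (w : word) : int -> int := foldr (fun i f x => s i%:Z (f x)) id w.

Lemma act_cat u v x : act (u ++ v) x = act u (act v x).
Proof. by elim: u => //= i u ->. Qed.

Lemma act_shift w M x : (n%:Z %| M)%Z -> act w (x + M) = act w x + M.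
Proof. move=> hM; elim: w => //= i w ->; exact: s_shift. Qed.

Lemma act_inj w : injective (act w).
Proof. elim: w => //= i w IH x y /(congr1 (s i%:Z)); rewrite !s_inv; exact: IH. Qed.


Definition desc (g : int -> int) (x : int) : bool := g (x + 1) < g x.
Definition aff (g : int -> int) := forall x M, (n%:Z %| M)%Z -> g (x + M) = g x + M.
Definition mu (g : int -> int) : int :=
  \sum_(a < n) (g (a : nat)%:Z - (a : nat)%:Z) ^+ 2.
Definition comp (g : int -> int) (j : int) := fun x => g (s j x).

Lemma aff_comp g j : aff g -> aff (comp g j).
Proof. by move=> hg x M hM; rewrite /comp s_shift // hg. Qed.

Lemma inj_comp g j : injective g -> injective (comp g j).
Proof. move=> hg x y /hg /(congr1 (s j)); by rewrite !s_inv. Qed.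

Lemma mu_ge0 g : 0 <= mu g.
Proof. by apply: sumr_ge0 => a _; rewrite sqr_ge0. Qed.

Lemma split2 (G : 'I_n -> int) (p q : 'I_n) : p != q ->
  \sum_a G a = G p + G q + \sum_(a | (a != p) && (a != q)) G a.
Proof.
move=> pq; rewrite (bigD1 p) //= (bigD1 q) 1?eq_sym //= addrA.
congr (_ + _); apply: eq_bigl => a; by rewrite andbT.
Qed.

Lemma sum2 (F F' : 'I_n -> int) (p q : 'I_n) : p != q ->
  (forall a, a != p -> a != q -> F' a = F a) ->
  F' p + F' q < F p + F q ->
  \sum_a F' a < \sum_a F a.
Proof.
move=> pq h hlt.
rewrite (split2 F' pq) (split2 F pq).
rewrite (eq_bigr F); last by move=> a /andP [h1 h2]; apply: h.
by rewrite ltrD2r.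
Qed.

Lemma mu_desc g (d : nat) : aff g -> (d < n)%N -> desc g d%:Z -> mu (comp g d%:Z) < mu g.
Proof.
move=> ag dn; rewrite /desc /mu => hd.
have [d1|dlast] := ltnP d.+1 n.
  pose p : 'I_n := Ordinal dn; pose q : 'I_n := Ordinal d1.
  apply: (@sum2 (fun a : 'I_n => (g (a : nat)%:Z - (a : nat)%:Z) ^+ 2) _ p q).
  - by rewrite -val_eqE /= ltn_eqF.
  - move=> a ap aq; rewrite /comp.
    suff -> : s d%:Z (a : nat)%:Z = (a : nat)%:Z by [].
    have hap : (a : nat) != d by [].
    have haq : (a : nat) != d.+1 by [].
    have ha := ltn_ord a.
    rewrite /s; s0ev (0:int); lia.
  rewrite /comp /= /s; s0ev (0:int).
  have -> : d%:Z + (d%:Z - d%:Z + 1) = d.+1%:Z by lia.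
  have -> : d%:Z + (d.+1%:Z - d%:Z - 1) = d%:Z by lia.
  have -> : g d.+1%:Z = g (d%:Z + 1) by congr g; lia.
  move: hd; set X := g (_ + 1); set Y := g (Posz d).
  rewrite !expr2; lia.
have dE : d = n.-1 by lia.
pose p : 'I_n := Ordinal (ltnW n2); pose q : 'I_n := Ordinal dn.
apply: (@sum2 (fun a : 'I_n => (g (a : nat)%:Z - (a : nat)%:Z) ^+ 2) _ p q).
- by rewrite -val_eqE /= dE; apply/eqP; lia.
- move=> a ap aq; rewrite /comp.
  suff -> : s d%:Z (a : nat)%:Z = (a : nat)%:Z by [].
  have hap : (a : nat) != 0%N by [].
  have haq : (a : nat) != d by [].
  have ha := ltn_ord a.
  rewrite /s; s0ev (0:int); lia.
rewrite /comp /= /s; s0ev (0:int).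
have dE' : d.+1 = n by lia.
have -> : d%:Z + (0%:Z - d%:Z - 1) = d%:Z + (- n%:Z) by lia.
have -> : d%:Z + (d%:Z - d%:Z + 1) = 0 + n%:Z by lia.
rewrite !ag ?dvdN //.
have h2 := ag 0 n%:Z (dvdzz _).
have hd' : g (d%:Z + 1) = g 0 + n%:Z by rewrite -h2; congr g; lia.
move: hd; rewrite hd'; set X := g 0; set Y := g (Posz d).
rewrite !expr2; lia.
Qed.


Definition dfind (g : int -> int) : nat := find (fun d : nat => desc g d%:Z) (iota 0 n).

Lemma dfind_lt g (i : nat) : (i < n)%N -> desc g i%:Z -> (dfind g < n)%N.
Proof.
move=> hi hd; rewrite /dfind -{2}(size_iota 0 n) -has_find.
by apply/hasP; exists i => //; rewrite mem_iota.
Qed.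

Lemma dfind_desc g : (dfind g < n)%N -> desc g (dfind g)%:Z.
Proof.
move=> h; have := h; rewrite /dfind -{2}(size_iota 0 n) -has_find => h'.
have := nth_find 0%N h'; rewrite nth_iota ?add0n //.
Qed.

Fixpoint canF (m : nat) (g : int -> int) : word :=
  match m with
  | 0 => [::]
  | m'.+1 => if (dfind g < n)%N then rcons (canF m' (comp g (dfind g)%:Z)) (dfind g) else [::]
  end.

Definition can g := canF (absz (mu g)).+1 g.

Lemma canF_eq m : forall m' g, aff g -> (absz (mu g) < m)%N -> (absz (mu g) < m')%N ->
  canF m g = canF m' g.
Proof.
elim: m => [|m IH] [|m'] g ag // h1 h2.
rewrite /=; case: ifP => // hd; congr rcons.
have := mu_desc ag hd (dfind_desc hd).
have := mu_ge0 (comp g (dfind g)%:Z).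
move=> hge hlt.
apply: IH; first exact: aff_comp; lia.
Qed.

Lemma canE g : aff g -> can g =
  if (dfind g < n)%N then rcons (can (comp g (dfind g)%:Z)) (dfind g) else [::].
Proof.
move=> ag; rewrite {1}/can /=; case: ifP => // hd; congr rcons.
have := mu_desc ag hd (dfind_desc hd).
have := mu_ge0 (comp g (dfind g)%:Z).
move=> hge hlt.
apply: canF_eq; first exact: aff_comp; lia.
Qed.


Lemma aeq_catr u v w : aeq n u v -> aeq n (u ++ w) (v ++ w).
Proof. by move=> h; have := aeq_ctx [::] w h. Qed.

Lemma aeq_catl u v w : aeq n u v -> aeq n (w ++ u) (w ++ v).
Proof. by move=> h; have := aeq_ctx w [::] h; rewrite !cats0. Qed.

Lemma modS (d : nat) : (d < n)%N -> ((d + 1) %% n = if d.+1 == n then 0 else d.+1)%N.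
Proof.
move=> hd; rewrite addn1; case: eqP => [->|h]; first by rewrite modnn.
by rewrite modn_small //; lia.
Qed.

Lemma adj_no (i d : nat) : (i < n)%N -> (d < n)%N -> adj_mod n i d ->
  (i = d.+1 \/ (d.+1 = n /\ i = 0) \/ d = i.+1 \/ (i.+1 = n /\ d = 0))%N.
Proof.
move=> hi hd; rewrite /adj_mod (modn_small hi) (modn_small hd) !modS //.
by case/orP => /eqP; case: (d.+1 =P n); case: (i.+1 =P n); lia.
Qed.

Lemma adj_yes (i d : nat) : (i < n)%N -> (d < n)%N ->
  (i = d.+1 \/ (d.+1 = n /\ i = 0) \/ d = i.+1 \/ (i.+1 = n /\ d = 0))%N ->
  adj_mod n i d.
Proof.
move=> hi hd h; rewrite /adj_mod (modn_small hi) (modn_small hd) !modS //.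
case: h => [h|[[h1 h]|[h|[h1 h]]]].
- by apply/orP; left; case: (d.+1 =P n) => ?; apply/eqP; lia.
- by apply/orP; left; rewrite h1 eqxx h.
- by apply/orP; right; case: (i.+1 =P n) => ?; apply/eqP; lia.
- by apply/orP; right; rewrite h1 eqxx h.
Qed.

Definition IHp g := forall g', mu g' < mu g -> aff g' -> injective g' ->
  forall j : nat, (j < n)%N -> desc g' j%:Z -> aeq n (can g') (rcons (can (comp g' j%:Z)) j).

Lemma comm_step g (i d : nat) : IHp g ->
  aff g -> injective g -> (i < n)%N -> (d < n)%N -> desc g i%:Z -> desc g d%:Z ->
  2 <= i%:Z - d%:Z <= n%:Z - 2 ->
  aeq n (rcons (can (comp g d%:Z)) d) (rcons (can (comp g i%:Z)) i).
Proof.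
move=> IH ag ig hi hd hdi hdd hc.
have fd1 : s d%:Z i%:Z = i%:Z by rewrite /s; s0ev (0:int); lia.
have fd2 : s d%:Z (i%:Z + 1) = i%:Z + 1 by rewrite /s; s0ev (0:int); lia.
have fi1 : s i%:Z d%:Z = d%:Z by rewrite /s; s0ev (0:int); lia.
have fi2 : s i%:Z (d%:Z + 1) = d%:Z + 1 by rewrite /s; s0ev (0:int); lia.
have descdi : desc (comp g d%:Z) i%:Z by rewrite /desc /comp fd1 fd2.
have descid : desc (comp g i%:Z) d%:Z by rewrite /desc /comp fi1 fi2.
have hcomm : comp (comp g d%:Z) i%:Z = comp (comp g i%:Z) d%:Z.
  by apply: functional_extensionality => x; rewrite /comp (s_comm x hc).
have A := IH _ (mu_desc ag hd hdd) (@aff_comp g d%:Z ag) (@inj_comp g d%:Z ig) i hi descdi.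
have B := IH _ (mu_desc ag hi hdi) (@aff_comp g i%:Z ag) (@inj_comp g i%:Z ig) d hd descid.
rewrite -!cats1.
apply: aeq_trans (aeq_catr [:: d] A) _.
rewrite -cats1 -catA /=.
apply: aeq_trans (aeq_catl _ (aeq_comm (i := i) (j := d) _ _)) _.
- by rewrite !modn_small //; apply/eqP; lia.
- by apply/negP => /adj_no; lia.
apply: aeq_sym; apply: aeq_trans (aeq_catr [:: i] B) _.
by rewrite hcomm -cats1 -catA; apply: aeq_refl.
Qed.


Lemma desc_shift g (x y : int) : aff g -> (n%:Z %| x - y)%Z -> desc g x = desc g y.
Proof.
move=> ag h; rewrite /desc.
have -> : x = y + (x - y) by lia.
have -> : y + (x - y) + 1 = (y + 1) + (x - y) by lia.
by rewrite (ag y (x - y) h) (ag (y + 1) (x - y) h) ltrD2r.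
Qed.

Lemma braid_step g (p q : nat) : IHp g ->
  aff g -> injective g -> (p < n)%N -> (q < n)%N ->
  (q = p.+1 \/ (p.+1 = n /\ q = 0))%N -> desc g p%:Z -> desc g q%:Z ->
  aeq n (rcons (can (comp g p%:Z)) p) (rcons (can (comp g q%:Z)) q).
Proof.
move=> IH ag ig hp hq hpq hdp hdq.
have hqd : (n%:Z %| q%:Z - (p%:Z + 1))%Z.
  case: hpq => [->|[h1 ->]]; first by have -> : (p.+1)%:Z - (p%:Z + 1) = 0 by lia.
  have -> : 0%:Z - (p%:Z + 1) = - n%:Z by lia.
  by rewrite dvdN.
have sq : forall x, s q%:Z x = s (p%:Z + 1) x by move=> x; apply: s_idx.
have shq : forall f, aff f -> desc f q%:Z = desc f (p%:Z + 1) by move=> f af; apply: desc_shift.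
have hdq' : g (p%:Z + 1 + 1) < g (p%:Z + 1) by have := hdq; rewrite shq.
have hdp' : g (p%:Z + 1) < g p%:Z by [].
have n3 : (3 <= n)%N.
  case: (ltnP 2 n) => // hn; have n2' : n = 2%N by lia.
  have := ag p%:Z n%:Z (dvdzz _); rewrite n2' => h.
  have : g (p%:Z + 1 + 1) = g p%:Z + 2 by rewrite -h; congr g; lia.
  lia.
have a1 : s p%:Z p%:Z = p%:Z + 1 by rewrite /s; s0ev (0:int); lia.
have a2 : s p%:Z (p%:Z + 1) = p%:Z by rewrite /s; s0ev (0:int); lia.
have a3 : s p%:Z (p%:Z + 1 + 1) = p%:Z + 1 + 1 by rewrite /s; s0ev (0:int); lia.
have b1 : s q%:Z (p%:Z + 1) = p%:Z + 1 + 1 by rewrite sq /s; s0ev (0:int); lia.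
have b2 : s q%:Z (p%:Z + 1 + 1) = p%:Z + 1 by rewrite sq /s; s0ev (0:int); lia.
have b3 : s q%:Z p%:Z = p%:Z by rewrite sq /s; s0ev (0:int); lia.
have D1 : desc (comp g p%:Z) q%:Z.
  by rewrite (shq _ (@aff_comp g p%:Z ag)) /desc /comp a3 a2; lia.
have D2 : desc (comp (comp g p%:Z) q%:Z) p%:Z.
  by rewrite /desc /comp b1 a3 b3 a1; lia.
have D3 : desc (comp g q%:Z) p%:Z.
  by rewrite /desc /comp b1 b3; lia.
have D4 : desc (comp (comp g q%:Z) p%:Z) q%:Z.
  by rewrite (shq _ (aff_comp _ (@aff_comp g q%:Z ag))) /desc /comp a3 b2 a2 b3; lia.
have hbr : comp (comp (comp g p%:Z) q%:Z) p%:Z = comp (comp (comp g q%:Z) p%:Z) q%:Z.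
  by apply: functional_extensionality => x; rewrite /comp !sq s_braid.
have m1 := mu_desc ag hp hdp.
have m2 := mu_desc (aff_comp _ ag) hq D1.
have m3 := mu_desc ag hq hdq.
have m4 := mu_desc (aff_comp _ ag) hp D3.
have I1 := IH _ m1 (@aff_comp g p%:Z ag) (@inj_comp g p%:Z ig) q hq D1.
have I2 := IH _ (lt_trans m2 m1) (@aff_comp (comp g p%:Z) q%:Z (@aff_comp g p%:Z ag))
  (@inj_comp (comp g p%:Z) q%:Z (@inj_comp g p%:Z ig)) p hp D2.
have I3 := IH _ m3 (@aff_comp g q%:Z ag) (@inj_comp g q%:Z ig) p hp D3.
have I4 := IH _ (lt_trans m4 m3) (@aff_comp (comp g q%:Z) p%:Z (@aff_comp g q%:Z ag))
  (@inj_comp (comp g q%:Z) p%:Z (@inj_comp g q%:Z ig)) q hq D4.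
rewrite -!cats1.
apply: aeq_trans (aeq_catr [:: p] I1) _.
rewrite -cats1 -catA /=.
apply: aeq_trans (aeq_catr [:: q; p] I2) _.
rewrite -cats1 -catA /=.
apply: aeq_trans (aeq_catl _ (aeq_braid (i := p) (j := q) _)) _.
  by apply: adj_yes => //; lia.
rewrite hbr.
apply: aeq_sym.
apply: aeq_trans (aeq_catr [:: q] I3) _.
rewrite -cats1 -catA /=.
apply: aeq_trans (aeq_catr [:: p; q] I4) _.
rewrite -cats1 -catA /=.
exact: aeq_refl.
Qed.


Lemma core m : forall g, (absz (mu g) < m)%N -> aff g -> injective g ->
  forall i : nat, (i < n)%N -> desc g i%:Z -> aeq n (can g) (rcons (can (comp g i%:Z)) i).
Proof.
elim: m => [|m IHm] g hm ag ig i hi hdi; first by [].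
have IH : IHp g.
  move=> g' hlt ag' ig' j hj hdj; apply: IHm => //.
  have := mu_ge0 g'; lia.
have hdn := dfind_lt hi hdi.
have hdd := dfind_desc hdn.
rewrite (canE ag) hdn.
move: hdn hdd; set d := dfind g => hdn hdd.
case: (d =P i) => [->|hne]; first exact: aeq_refl.
have : (2 <= i%:Z - d%:Z <= n%:Z - 2) \/ (2 <= d%:Z - i%:Z <= n%:Z - 2) \/
  (i = d.+1 \/ (d.+1 = n /\ i = 0))%N \/ (d = i.+1 \/ (i.+1 = n /\ d = 0))%N by lia.
case=> [h|[h|[h|h]]].
- exact: comm_step.
- apply: aeq_sym; exact: comm_step.
- exact: braid_step.
- apply: aeq_sym; exact: braid_step.
Qed.


Lemma act_aff w : aff (act w).
Proof. by move=> x M hM; apply: act_shift. Qed.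

Lemma s_self (j : int) : s j j = j + 1.
Proof. by rewrite /s; s0ev (0:int); lia. Qed.

Lemma s_selfS (j : int) : s j (j + 1) = j.
Proof. by rewrite /s; s0ev (0:int); lia. Qed.

Lemma C1 w : aeq n w (can (act w)).
Proof.
elim/last_ind: w => [|w i IH].
  rewrite (canE (act_aff [::])); case: ifP => [h|_]; last exact: aeq_refl.
  by have := dfind_desc h; rewrite /desc /=; lia.
pose i' := (i %% n)%N.
have hi' : (i' < n)%N by rewrite /i' ltn_pmod //; lia.
have hidx : forall x, s i%:Z x = s i'%:Z x.
  move=> x; apply: s_idx; apply/dvdzP; exists (i %/ n)%N%:Z.
  rewrite {1}(divn_eq i n) /i'; lia.
pose f := act (rcons w i).
have ef : f = comp (act w) i'%:Z.
  by apply: functional_extensionality => x; rewrite /f -cats1 act_cat /= /comp hidx.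
have eg : comp f i'%:Z = act w.
  by apply: functional_extensionality => x; rewrite ef /comp s_inv.
have af : aff f := act_aff _.
have inf : injective f := @act_inj (rcons w i).
have step1 : aeq n (rcons w i) (rcons (can (act w)) i').
  rewrite -!cats1; apply: aeq_trans (aeq_catr [:: i] IH) _.
  exact: aeq_catl (aeq_mod n i).
case hd: (desc f i'%:Z).
  have := core (leqnn _) af inf hi' hd; rewrite eg => h.
  apply: aeq_trans step1 _; exact: aeq_sym.
have hdw : desc (act w) i'%:Z.
  rewrite -eg /desc /comp s_self s_selfS.
  have hne : f i'%:Z != f (i'%:Z + 1) by apply/eqP => /inf; lia.
  move: hd; rewrite /desc; lia.
have := core (leqnn _) (act_aff w) (@act_inj w) hi' hdw; rewrite -ef => h.
apply: aeq_trans step1 _.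
rewrite -!cats1; apply: aeq_trans (aeq_catr [:: i'] h) _.
rewrite -cats1 -catA /=.
have := @aeq_catl _ _ (can f) (aeq_sq n i'); rewrite cats0 => h'.
by apply: aeq_trans h' _; rewrite /f cats1; apply: aeq_refl.
Qed.

Lemma faithful u v : (forall x, act u x = act v x) -> aeq n u v.
Proof.
move=> h; have e : act u = act v by apply: functional_extensionality.
apply: aeq_trans (C1 u) _; rewrite e; apply: aeq_sym; exact: C1.
Qed.


Lemma s_trans (j k y : int) : s (j + k) y = s j (y - k) + k.
Proof. rewrite /s; have -> : y - (j + k) = y - k - j by lia. lia. Qed.

Lemma nat_mod_dvd (a : nat) : (n%:Z %| (a %% n)%N%:Z - a%:Z)%Z.
Proof.
apply/dvdzP; exists (- (a %/ n)%N%:Z).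
rewrite {2}(divn_eq a n); lia.
Qed.

Lemma act_rho w (k : nat) x : act (rho_pow n k w) x = act w (x - k%:Z) + k%:Z.
Proof.
elim: w x => [|i w IH] x /=; first lia.
rewrite IH (@s_idx _ (i%:Z + k%:Z)).
  by rewrite s_trans; congr (s _ _ + _); lia.
have := nat_mod_dvd (i + k); have -> : (i + k)%N%:Z = i%:Z + k%:Z by lia.
done.
Qed.

Lemma act_rhoN w (k : nat) x : (k < n)%N -> act (rho_powN n k w) x = act w (x + k%:Z) - k%:Z.
Proof.
move=> hk; elim: w x => [|i w IH] x /=; first lia.
rewrite IH (@s_idx _ (i%:Z + - k%:Z)).
  by rewrite s_trans; congr (s _ _ + _); lia.
rewrite (modn_small hk).
have h := nat_mod_dvd (i + (n - k)).
have -> : ((i + (n - k)) %% n)%N%:Z - (i%:Z + - k%:Z) =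
  (((i + (n - k)) %% n)%N%:Z - (i + (n - k))%N%:Z) + n%:Z by lia.
exact: dvdD h (dvdzz _).
Qed.

Lemma dvd3 (t : int) : t = 0 \/ t = n%:Z \/ t = - n%:Z -> (n%:Z %| t)%Z.
Proof. by case=> [->|[->|->]]; rewrite ?dvdN. Qed.

Lemma phi_gen_ok (i v : nat) : (1 <= v <= n)%N ->
  (1 <= phi_gen n i v <= n)%N /\ (n%:Z %| s i%:Z v%:Z - (phi_gen n i v)%:Z)%Z.
Proof.
move=> hv.
have -> : s i%:Z v%:Z = s (i %% n)%N%:Z v%:Z.
  apply: s_idx; have := nat_mod_dvd i => h; have := dvdB (dvdz0 n%:Z) h.
  by rewrite sub0r opprB.
have hi : (i %% n < n)%N by rewrite ltn_pmod //; lia.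
rewrite /phi_gen /swap; move: hi; set j := (i %% n)%N => hi.
case: (j =P 0%N) => [j0|jn0] /=.
  rewrite j0.
  case: (v =P 1%N) => [->|v1].
    split; first lia. apply: dvd3; rewrite /s; s0ev (0:int); lia.
  case: (v =P n) => [->|vn].
    split; first lia. apply: dvd3; rewrite /s; s0ev (0:int); lia.
  split; first lia. apply: dvd3; rewrite /s; s0ev (0:int); lia.
case: (v =P j) => [->|v1].
  split; first lia. apply: dvd3; rewrite /s; s0ev (0:int); lia.
case: (v =P j.+1) => [->|vn].
  split; first lia. apply: dvd3; rewrite /s; s0ev (0:int); lia.
split; first lia. apply: dvd3; rewrite /s; s0ev (0:int); lia.
Qed.


Lemma phi_act w (v : nat) : (1 <= v <= n)%N ->
  (1 <= phi n w v <= n)%N /\ (n%:Z %| act w v%:Z - (phi n w v)%:Z)%Z.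
Proof.
move=> hv; elim: w => [|i w [IH1 IH2]] /=; first by split; rewrite ?subrr.
have [h1 h2] := phi_gen_ok i IH1; split => //.
set a := act w v%:Z; set b := phi n w v.
have -> : a = b%:Z + (a - b%:Z) by lia.
rewrite s_shift //.
have -> : s i%:Z b%:Z + (a - b%:Z) - (phi_gen n i b)%:Z =
  (s i%:Z b%:Z - (phi_gen n i b)%:Z) + (a - b%:Z) by lia.
exact: dvdD.
Qed.

Lemma glide_cong w (k : nat) : glide_offset n w k ->
  forall x, (n%:Z %| act w x - x - k%:Z)%Z.
Proof.
move=> [hk [gA gB]] x.
have [M [r [hM hr ex]]] := decomp (x - 1).
pose v := (absz r).+1.
have hv : (1 <= v <= n)%N by rewrite /v; lia.
have xe : x = v%:Z + M by rewrite /v; lia.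
have [_ hp] := phi_act w hv.
rewrite xe act_shift //.
have -> : act w v%:Z + M - (v%:Z + M) - k%:Z =
  (act w v%:Z - (phi n w v)%:Z) + ((phi n w v)%:Z - v%:Z - k%:Z) by lia.
apply: dvdD => //; apply: dvd3.
case: (leqP v (n - k)) => hvk.
  by rewrite gA; [lia | lia].
rewrite gB; [lia | lia].
Qed.

Lemma main_sec w1 w2 (k1 k2 : nat) : glide_offset n w1 k1 -> glide_offset n w2 k2 ->
  aeq n (w2 ++ w1) (rho_pow n k2 w1 ++ rho_powN n k1 w2).
Proof.
move=> g1 g2; apply: faithful => x.
have hk1 : (k1 < n)%N by case: g1.
rewrite !act_cat act_rho act_rhoN //.
have h1 := glide_cong g1 x.
have h2 := glide_cong g2 (x + k1%:Z).
set e1 := act w1 x - x - k1%:Z in h1.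
set e2 := act w2 (x + k1%:Z) - (x + k1%:Z) - k2%:Z in h2.
have E1 : act w1 x = (x + k1%:Z) + e1 by rewrite /e1; lia.
rewrite {1}E1 (act_shift w2 (x + k1%:Z) h1).
have -> : act w2 (x + k1%:Z) - k1%:Z - k2%:Z = x + e2 by rewrite /e2; lia.
rewrite (act_shift w1 x h2) E1 /e2; lia.
Qed.

End Aff.

Theorem lemma2p1 (n : nat) (w1 w2 : word) (k1 k2 : nat) :
  2 <= n -> glide_offset n w1 k1 -> glide_offset n w2 k2 ->
  aeq n (w2 ++ w1) (rho_pow n k2 w1 ++ rho_powN n k1 w2).
Proof. move=> n2; exact: main_sec. Qed.
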